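(* Let $d \geq 2$, $N, K \geq 1$ be integers, $\mathbf{y}_1,\ldots,\mathbf{y}_N \in \mathbb{R}^d$ with matrix $\mathbf{Y} = [\mathbf{y}_1,\ldots,\mathbf{y}_N]$, and $\rho_k^{[i]} \geq 0$ with $\sum_{k=1}^K \rho_k^{[i]} = 1$ for each $i$. Put $\mathbf{A}_k = \sum_{i} \rho_k^{[i]}\mathbf{y}_i\mathbf{y}_i^\mathrm{T}$, $\gamma_k = \sum_i \rho_k^{[i]}$, $\lambda_k = $ largest eigenvalue of $\mathbf{A}_k$. For $S \subseteq [K]$ define $\sigma^2(S) = \big(\|\mathbf{Y}\|_\mathrm{F}^2 - \sum_{k\in S}\lambda_k\big)/\big(dN - \sum_{k\in S}\gamma_k\big)$ and $g(S) = \big[dN - \sum_{k\in S}\gamma_k\big]\ln\sigma^2(S) + \sum_{k\in S}\gamma_k\ln(\lambda_k/\gamma_k)$, and assume $\gamma_k>0$, $\lambda_k>0$ for all $k$ and $\sigma^2(S)>0$ for all $S\subseteq[K]$. Let $\mathcal{V} = \{S \subseteq [K] : \sigma^2(S) \leq \lambda_k/\gamma_k \text{ for all } k \in S\}$. Then there exists a minimizer $\hat{S}$ of $g$ over $\mathcal{V}$ that is saturated, i.e. $\hat{S} \in \mathcal{V}$ and $\sigma^2(\hat{S}) > \lambda_j/\gamma_j$ for all $j \in [K]\setminus\hat{S}$.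
   Context: $[K] = \{1,\ldots,K\}$; $\|\cdot\|_\mathrm{F}$ is the Frobenius norm. *)

(* Defs.v *)
From HB Require Import structures.
From mathcomp Require Import all_boot all_order all_algebra.
From mathcomp Require Import all_classical all_reals all_analysis.
Set Implicit Arguments. Unset Strict Implicit. Unset Printing Implicit Defensive.
Import Order.TTheory GRing.Theory Num.Theory.
Local Open Scope ring_scope.

Section Defs.
Variable R : realType.

Definition is_largest_eigenvalue (n : nat) (A : 'M[R]_n) (lam : R) : Prop :=
  eigenvalue A lam /\ (forall mu : R, eigenvalue A mu -> mu <= lam).

Definition frob2 (m n : nat) (Y : 'M[R]_(m, n)) : R :=
  \sum_(i < m) \sum_(j < n) Y i j ^+ 2.

Definition Amat (d N K : nat) (Y : 'M[R]_(d, N)) (rho : 'I_N -> 'I_K -> R)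
  (k : 'I_K) : 'M[R]_d :=
  \sum_(i < N) rho i k *: (col i Y *m (col i Y)^T).

Definition gam (N K : nat) (rho : 'I_N -> 'I_K -> R) (k : 'I_K) : R :=
  \sum_(i < N) rho i k.

Definition sigma2 (d N K : nat) (Y : 'M[R]_(d, N)) (rho : 'I_N -> 'I_K -> R)
  (lam : 'I_K -> R) (S : {set 'I_K}) : R :=
  (frob2 Y - \sum_(k in S) lam k) / ((d * N)%:R - \sum_(k in S) gam rho k).

Definition gfun (d N K : nat) (Y : 'M[R]_(d, N)) (rho : 'I_N -> 'I_K -> R)
  (lam : 'I_K -> R) (S : {set 'I_K}) : R :=
  ((d * N)%:R - \sum_(k in S) gam rho k) * ln (sigma2 Y rho lam S)
  + \sum_(k in S) gam rho k * ln (lam k / gam rho k).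

Definition inV (d N K : nat) (Y : 'M[R]_(d, N)) (rho : 'I_N -> 'I_K -> R)
  (lam : 'I_K -> R) (S : {set 'I_K}) : Prop :=
  forall k, k \in S -> sigma2 Y rho lam S <= lam k / gam rho k.

End Defs.

(* Main.v *)
Require Import Defs.
From HB Require Import structures.
From mathcomp Require Import all_boot all_order all_algebra.
From mathcomp Require Import all_classical all_reals all_analysis.
Import Order.TTheory GRing.Theory Num.Theory.
Local Open Scope ring_scope.
From mathcomp Require Import ring lra.

Lemma ln_le_sub1 (R : realType) (x : R) : 0 < x -> ln x <= x - 1.
Proof.
move=> x0; have := @le_ln1Dx R (x - 1).
have -> : 1 + (x - 1) = x by lra.
apply; lra.
Qed.

Lemma step1 (R : realType) (a1 b1 A B : R) : 0 < a1 -> 0 < b1 -> 0 < A -> 0 < B ->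
  b1 * ln (a1 / b1) <= b1 * ln (A / B) + (a1 * B / A - b1).
Proof.
move=> a0 b0 A0 B0.
have q0 : 0 < A / B by apply: divr_gt0.
have r0 : 0 < a1 / b1 by apply: divr_gt0.
have rq0 : 0 < (a1 / b1) / (A / B) by apply: divr_gt0.
have -> : a1 / b1 = ((a1 / b1) / (A / B)) * (A / B).
  by rewrite divfK // gt_eqF.
rewrite lnM ?posrE // mulrDr addrC lerD2l.
have h := @ln_le_sub1 _ _ rq0.
have -> : a1 * B / A - b1 = b1 * ((a1 / b1) / (A / B) - 1).
  field; rewrite ?gt_eqF //.
by rewrite ler_pM2l.
Qed.

Lemma superadd (R : realType) (a1 b1 a2 b2 : R) : 0 < a1 -> 0 < b1 -> 0 < a2 -> 0 < b2 ->
  b1 * ln (a1 / b1) + b2 * ln (a2 / b2) <= (b1 + b2) * ln ((a1 + a2) / (b1 + b2)).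
Proof.
move=> a10 b10 a20 b20.
have A0 : 0 < a1 + a2 by lra.
have B0 : 0 < b1 + b2 by lra.
have h1 := @step1 _ _ _ _ _ a10 b10 A0 B0.
have h2 := @step1 _ _ _ _ _ a20 b20 A0 B0.
have e : (a1 * (b1 + b2) / (a1 + a2) - b1) + (a2 * (b1 + b2) / (a1 + a2) - b2) = 0.
  field; rewrite gt_eqF //.
set L := ln ((a1 + a2) / (b1 + b2)) in h1 h2 *.
have -> : (b1 + b2) * L = (b1 * L + (a1 * (b1 + b2) / (a1 + a2) - b1)) + (b2 * L + (a2 * (b1 + b2) / (a1 + a2) - b2)).
  by rewrite addrACA e addr0 mulrDl.
exact: lerD.
Qed.
Lemma alg1 (R : realType) (a b l c : R) : 0 < b -> 0 < c -> 0 < b - c -> 0 < l ->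
  0 < a / b -> 0 < (a - l) / (b - c) -> a / b <= l / c ->
  (a - l) / (b - c) <= a / b /\
  (b - c) * ln ((a - l) / (b - c)) + c * ln (l / c) <= b * ln (a / b).
Proof.
move=> b0 c0 bc0 l0 s0 s1 hs.
have ea : a = (a / b) * b by rewrite divfK // gt_eqF.
have el : l = (l / c) * c by rewrite divfK // gt_eqF.
have eal : a - l = ((a - l) / (b - c)) * (b - c) by rewrite divfK // gt_eqF.
have al0 : 0 < a - l by rewrite eal mulr_gt0.
split.
  rewrite ler_pdivrMr //.
  move: hs; set s := a / b; set t := l / c => hs.
  rewrite {1}ea {1}el.
  have : 0 <= (t - s) * c by apply: mulr_ge0; [rewrite subr_ge0 | exact: ltW].
  move=> h; rewrite mulrBl in h; rewrite mulrBr; rewrite -/s -/t; lra.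
have := @superadd _ _ _ _ _ al0 bc0 l0 c0.
by rewrite subrK addrC subrK.
Qed.

Theorem lemma4 (R : realType) (d N K : nat)
  (hd : (2 <= d)%N) (hN : (1 <= N)%N) (hK : (1 <= K)%N)
  (Y : 'M[R]_(d, N)) (rho : 'I_N -> 'I_K -> R) (lam : 'I_K -> R)
  (hrho0 : forall i k, 0 <= rho i k)
  (hrho1 : forall i, \sum_(k < K) rho i k = 1)
  (hlam : forall k, is_largest_eigenvalue (Amat Y rho k) (lam k))
  (hgam_pos : forall k, 0 < gam rho k)
  (hlam_pos : forall k, 0 < lam k)
  (hsig_pos : forall S : {set 'I_K}, 0 < sigma2 Y rho lam S) :
  exists Shat : {set 'I_K},
    [/\ inV Y rho lam Shat,
        (forall S : {set 'I_K}, inV Y rho lam S ->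
           gfun Y rho lam Shat <= gfun Y rho lam S)
      & (forall j : 'I_K, j \notin Shat ->
           lam j / gam rho j < sigma2 Y rho lam Shat)].
Proof.
have hGtot : \sum_(k < K) gam rho k = N%:R.
  rewrite /gam exchange_big /= (eq_bigr (fun _ => 1)) //.
  by rewrite sumr_const card_ord.
have hden : forall S : {set 'I_K}, 0 < (d * N)%:R - \sum_(k in S) gam rho k.
  move=> S.
  have h1 : \sum_(k in S) gam rho k <= N%:R.
    rewrite -hGtot [X in _ <= X](bigID (mem S)) /= lerDl.
    by apply: sumr_ge0 => k _; exact: ltW.
  have h2 : (N < d * N)%N by rewrite -[X in (X < _)%N]mul1n ltn_mul2r hN.
  have h3 : N%:R < (d * N)%:R :> R by rewrite ltr_nat.
  lra.
pose inVb (S : {set 'I_K}) := [forall k in S, sigma2 Y rho lam S <= lam k / gam rho k].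
have inVP : forall S, inV Y rho lam S <-> inVb S.
  move=> S; split.
    by move=> h; apply/forall_inP.
  by move/forall_inP.
have step : forall (S : {set 'I_K}) j, j \notin S -> inVb S ->
    sigma2 Y rho lam S <= lam j / gam rho j ->
    inVb (j |: S) /\ gfun Y rho lam (j |: S) <= gfun Y rho lam S.
  move=> S j jS hS hj.
  set a := frob2 Y - \sum_(k in S) lam k.
  set b := (d * N)%:R - \sum_(k in S) gam rho k.
  have eS : sigma2 Y rho lam S = a / b by [].
  have eS' : sigma2 Y rho lam (j |: S) = (a - lam j) / (b - gam rho j).
    rewrite /sigma2 !big_setU1 //= /a /b.
    congr (_ / _); ring.
  have bc0 : 0 < b - gam rho j.
    have := hden (j |: S); rewrite big_setU1 //= /b.
    by move=> h; lra.
  have := hsig_pos (j |: S); rewrite eS' => s1.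
  have := hsig_pos S; rewrite eS => s0.
  rewrite eS in hj.
  have [H1 H2] := @alg1 _ _ _ _ _ (hden S) (hgam_pos j) bc0 (hlam_pos j) s0 s1 hj.
  split.
    apply/forall_inP => k; rewrite in_setU1 eS'.
    case/orP => [/eqP -> | kS].
      exact: le_trans H1 hj.
    apply: le_trans H1 _.
    by move/forall_inP: hS => /(_ k kS); rewrite eS.
  rewrite /gfun !big_setU1 //= -/a -/b.
  rewrite -/(sigma2 Y rho lam S) eS.
  have -> : (d * N)%:R - (gam rho j + \sum_(i in S) gam rho i) = b - gam rho j.
    by rewrite /b; ring.
  have -> : sigma2 Y rho lam (j |: S) = (a - lam j) / (b - gam rho j) by [].
  by rewrite addrA lerD2r.
have V0 : inVb (@finset.set0 _) by apply/forall_inP => k; rewrite finset.in_set0.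
case: (@arg_minP _ _ _ _ inVb (gfun Y rho lam) V0) => S0 VS0 minS0.
pose P := fun S => inVb S && (gfun Y rho lam S <= gfun Y rho lam S0).
have PS0 : P S0 by rewrite /P VS0 lexx.
case: (@arg_maxnP _ S0 P (fun S => #|S|) PS0) => Sh /andP [VSh gSh] maxSh.
exists Sh; split.
- by apply/inVP.
- move=> S /inVP VS; exact: le_trans gSh (minS0 S VS).
- move=> j jSh; rewrite ltNge; apply/negP => hj.
  have [V' g'] := step Sh j jSh VSh hj.
  have : P (j |: Sh) by rewrite /P V' (le_trans g' gSh).
  move/maxSh; rewrite cardsU1 jSh /=.
  by rewrite add1n ltnn.
Qed.
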